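(* Let $d\ge 1$ and let $\mathcal{F}$ be a class of real-valued integrable functions on $[0,1]^d$; for $f\in\mathcal{F}$ write $\mu(f)=\int_{[0,1]^d} f(\boldsymbol{x})\,\mathrm{d}\boldsymbol{x}$. Let $\alpha>1$ and $0<m\le M<\infty$. Suppose that $\mathcal{F}$ has a superlinear root mean square lower bound, namely for every $n\ge 1$ and every choice of random points $\boldsymbol{x}_1,\dots,\boldsymbol{x}_n\in[0,1]^d$ (with arbitrary joint distribution), $$\sup_{f\in\mathcal{F}}\mathbb{E}\biggl(\biggl|\frac1n\sum_{i=1}^n f(\boldsymbol{x}_i)-\mu(f)\biggr|^2\biggr)^{1/2}> m n^{-\alpha},$$ where $\mathbb{E}$ denotes expectation over the randomness of the points. Suppose further that there is an infinite sequence of random points $\boldsymbol{x}_1,\boldsymbol{x}_2,\dots\in[0,1]^d$ (with arbitrary joint distribution; no unbiasedness or correlation assumptions) and a strictly increasing sequence of positive integers $n_1<n_2<\cdots$ such that $$\sup_{f\in\mathcal{F}}\mathbb{E}\biggl(\biggl|\frac1n\sum_{i=1}^n f(\boldsymbol{x}_i)-\mu(f)\biggr|^2\biggr)^{1/2}\le M n^{-\alpha}\quad\text{for all } n\in\{n_1,n_2,\dots\}.$$ Then for every $k\ge1$, the ratio $\rho=\rho_k=n_{k+1}/n_k$ satisfies $$\rho \ge 1 + \biggl[\frac{m}{M}\bigl(1+\rho^{1-\alpha}\bigr)^{-1}\biggr]^{1/(\alpha-1)} \ge 1 + \Bigl(\frac{m}{2M}\Bigr)^{1/(\alpha-1)}.$$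 *)

(* Defs.v *)
From HB Require Import structures.
From mathcomp Require Import all_boot all_order all_algebra.
From mathcomp Require Import all_classical all_reals all_analysis.
Set Implicit Arguments. Unset Strict Implicit. Unset Printing Implicit Defensive.
Import Order.TTheory GRing.Theory Num.Theory.
Local Open Scope classical_set_scope.
Local Open Scope ring_scope.

Definition cube (R : realType) (d : nat) : set (d.-tuple R) :=
  [set t | forall i : 'I_d, 0 <= tnth t i <= 1].
Arguments cube : clear implicits.

Definition box (R : realType) (d : nat) (a b : d.-tuple R) : set (d.-tuple R) :=
  [set t | forall i : 'I_d, tnth a i <= tnth t i <= tnth b i].

(** [lam] is d-dimensional Lebesgue measure: it gives every box its volume
    (this determines it uniquely on the product Borel sigma-algebra). *)
Definition is_lebesgue_measure (R : realType) (d : nat)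
    (lam : {measure set (d.-tuple R) -> \bar R}) : Prop :=
  forall a b : d.-tuple R, (forall i : 'I_d, tnth a i <= tnth b i) ->
    lam (box a b) = (\prod_(i < d) (tnth b i - tnth a i))%:E.

Definition mu (R : realType) (d : nat) (lam : {measure set (d.-tuple R) -> \bar R})
    (f : d.-tuple R -> R) : R :=
  Rintegral lam (cube R d) f.

(** quadrature error (1/n) sum_{i=1}^n f(x_i(w)) - mu(f); the points x_1,...,x_n
    are x 0, ..., x (n-1) *)
Definition qmc_err (R : realType) (d : nat) (lam : {measure set (d.-tuple R) -> \bar R})
    (T : Type) (f : d.-tuple R -> R) (x : nat -> T -> d.-tuple R) (n : nat) (w : T) : R :=
  n%:R^-1 * (\sum_(i < n) f (x i w)) - mu lam f.

Definition rmse (R : realType) (d : nat) (lam : {measure set (d.-tuple R) -> \bar R})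
    (dO : measure_display) (O : measurableType dO) (P : probability O R)
    (f : d.-tuple R -> R) (x : nat -> O -> d.-tuple R) (n : nat) : \bar R :=
  sqrte (\int[P]_w ((qmc_err lam f x n w) ^+ 2)%:E)%E.

Definition sup_rmse (R : realType) (d : nat) (lam : {measure set (d.-tuple R) -> \bar R})
    (F : set (d.-tuple R -> R))
    (dO : measure_display) (O : measurableType dO) (P : probability O R)
    (x : nat -> O -> d.-tuple R) (n : nat) : \bar R :=
  ereal_sup [set rmse lam P f x n | f in F].

Definition random_points (R : realType) (d : nat)
    (dO : measure_display) (O : measurableType dO) (x : nat -> O -> d.-tuple R) : Prop :=
  (forall i, measurable_fun setT (x i)) /\ (forall i w, cube R d (x i w)).

(* Main.v *)
Require Import Defs.
From HB Require Import structures.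
From mathcomp Require Import all_boot all_order all_algebra.
From mathcomp Require Import all_classical all_reals all_analysis.
From mathcomp Require Import ring lra.
Import Order.TTheory GRing.Theory Num.Theory.
Local Open Scope classical_set_scope.
Local Open Scope ring_scope.

Lemma sq_Lnorm (R : realType) (dO : measure_display) (O : measurableType dO)
  (P : probability O R) (g : O -> R) :
  sqrte (\int[P]_w ((g w) ^+ 2)%:E)%E = Lnorm P 2%:E (EFin \o g).
Proof.
rewrite unlock /= -poweR12_sqrt; last by apply: integral_ge0 => w _; rewrite lee_fin sqr_ge0.
congr (_ `^ _)%E; apply: eq_integral => w _ /=.
by rewrite powR_mulrn ?normr_ge0 // real_normK // num_real.
Qed.

Lemma sq_scale (R : realType) (dO : measure_display) (O : measurableType dO)
  (P : probability O R) (g : O -> R) (c : R) : 0 <= c -> measurable_fun setT g ->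
  sqrte (\int[P]_w ((c * g w) ^+ 2)%:E)%E = (c%:E * sqrte (\int[P]_w ((g w) ^+ 2)%:E))%E.
Proof.
move=> c0 mg.
under eq_integral do rewrite exprMn EFinM.
rewrite ge0_integralZl_EFin //; first last.
- by rewrite sqr_ge0.
- by apply/measurable_realfun.measurable_EFinP; exact: measurable_realfun.measurable_funX.
- by move=> w _; rewrite lee_fin sqr_ge0.
rewrite sqrteM ?lee_fin ?sqr_ge0 //=.
by rewrite sqrtr_sqr ger0_norm.
Qed.
Lemma alg (R : realType) (a b S0 SL mu : R) : a != 0 -> b != 0 -> 0 < a -> 0 < b ->
  b^-1 * SL - mu = (a+b)/b * ((a+b)^-1 * (S0+SL) - mu) + - (a/b * (a^-1 * S0 - mu)).
Proof.
move=> a0 b0 ap bp.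
have ab : a + b != 0 by rewrite gt_eqF // addr_gt0.
field. by rewrite b0 a0 ab.
Qed.

Lemma meas_err (R : realType) (d : nat) (lam : {measure set (d.-tuple R) -> \bar R})
  (dO : measure_display) (O : measurableType dO) (f : d.-tuple R -> R)
  (x : nat -> O -> d.-tuple R) (n : nat) :
  (forall i, measurable_fun setT (f \o x i)) ->
  measurable_fun setT (qmc_err lam f x n).
Proof.
move=> mfx; rewrite /qmc_err.
apply: measurable_realfun.measurable_funB; last exact: measurable_cst.
apply: measurable_realfun.measurable_funM; first exact: measurable_cst.
by apply: measurable_sum => i; exact: mfx.
Qed.

Lemma key (R : realType) (d : nat) (lam : {measure set (d.-tuple R) -> \bar R})
  (dO : measure_display) (O : measurableType dO) (P : probability O R)
  (f : d.-tuple R -> R) (x : nat -> O -> d.-tuple R) (n0 L : nat) :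
  (forall i, measurable_fun setT (f \o x i)) -> (0 < n0)%N -> (0 < L)%N ->
  (rmse lam P f (fun i => x (n0 + i)%N) L <=
   ((n0 + L)%:R / L%:R)%:E * rmse lam P f x (n0 + L) +
   (n0%:R / L%:R)%:E * rmse lam P f x n0)%E.
Proof.
move=> mfx n0p Lp.
have a0 : (0 : R) < n0%:R by rewrite ltr0n.
have b0 : (0 : R) < L%:R by rewrite ltr0n.
pose u := fun w => (n0 + L)%:R / L%:R * qmc_err lam f x (n0 + L) w.
pose v := fun w => - (n0%:R / L%:R * qmc_err lam f x n0 w).
have E : rmse lam P f (fun i => x (n0 + i)%N) L = Lnorm P 2%:E (EFin \o (u \+ v)).
  rewrite -sq_Lnorm /rmse; congr sqrte; apply: eq_integral => w _; congr (_ ^+ 2)%:E.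
  rewrite /u /v /qmc_err /= [X in _ = _ * (_ * X - _) - _]big_split_ord /= natrD.
  by apply: alg; rewrite ?gt_eqF.
rewrite E.
have m1 : measurable_fun setT (qmc_err lam f x (n0 + L)) := @meas_err _ _ lam _ _ f x _ mfx.
have m0 : measurable_fun setT (qmc_err lam f x n0) := @meas_err _ _ lam _ _ f x _ mfx.
apply: le_trans.
  apply: minkowski_EFin; last by rewrite ler1n.
  - by apply: measurable_realfun.measurable_funM => //; exact: measurable_cst.
  - apply: measurable_realfun.measurable_funN.
    by apply: measurable_realfun.measurable_funM => //; exact: measurable_cst.
rewrite -!sq_Lnorm /u /v.
under [X in (_ + sqrte X)%E]eq_integral do rewrite sqrrN.
rewrite /rmse !sq_scale //; by rewrite divr_ge0 // ler0n.
Qed.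
Lemma invpow (R : realType) (x s : R) : 0 < x -> (x^-1) `^ s = (x `^ s)^-1.
Proof. by move=> x0; rewrite -powR_inv1 ?ltW // -powRrM mulN1r powRN. Qed.

Lemma divpow (R : realType) (x y s : R) : 0 <= x -> 0 < y -> (x / y) `^ s = x `^ s / y `^ s.
Proof.
move=> x0 y0; rewrite powRM //; last by rewrite invr_ge0 ltW.
by rewrite invpow.
Qed.

Lemma xpow (R : realType) (x al : R) : 0 < x -> x * x `^ (- al) = x `^ (- (al - 1)).
Proof.
move=> x0; rewrite opprB addrC powRD; last by apply/implyP => _; rewrite gt_eqF.
by rewrite powRr1 ?(ltW x0) // mulrC.
Qed.

Lemma real_part (R : realType) (a l m M al : R) : 0 < a -> 0 < l -> 1 < al -> 0 < m -> m <= M ->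
  m * l `^ (- al) < l^-1 * ((a + l) * (M * (a + l) `^ (- al)) + a * (M * a `^ (- al))) ->
  let rho := (a + l) / a in
    1 + ((m / M) * (1 + rho `^ (1 - al))^-1) `^ (al - 1)^-1 <= rho /\
    1 + (m / (2 * M)) `^ (al - 1)^-1
      <= 1 + ((m / M) * (1 + rho `^ (1 - al))^-1) `^ (al - 1)^-1.
Proof.
move=> a0 l0 al1 m0 mM H rho.
have M0 : 0 < M by apply: lt_le_trans mM.
set s := al - 1.
have s0 : 0 < s by rewrite /s subr_gt0.
have al0 : l + a > 0 by rewrite addr_gt0.
have H' : m * (l `^ s)^-1 < M * (((a + l) `^ s)^-1 + (a `^ s)^-1).
  rewrite -!powRN.
  have := H; rewrite (mulrA (a+l)) (mulrC (a + l)) -mulrA xpow ?addr_gt0 //.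
  rewrite (mulrA a) (mulrC a) -mulrA xpow // -mulrDr.
  rewrite -(ltr_pM2l l0) mulrA mulrA mulfV ?gt_eqF // mul1r.
  by rewrite (mulrC l) -mulrA xpow.
set A := a `^ s. set B := (a + l) `^ s. set P := l `^ s.
have A0 : 0 < A by rewrite powR_gt0.
have B0 : 0 < B by rewrite powR_gt0 // addr_gt0.
have P0 : 0 < P by rewrite powR_gt0.
have AB : A <= B.
  rewrite /A /B; apply: ge0_ler_powR; rewrite ?nnegrE.
  - exact: ltW.
  - exact: ltW.
  - by rewrite ltW // addr_gt0.
  - by rewrite lerDl ltW.
have rhoE : rho `^ (1 - al) = A / B.
  rewrite /rho (_ : 1 - al = - s); last by rewrite /s opprB.
  by rewrite powRN divpow ?ltW ?addr_gt0 // invf_div.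
rewrite rhoE.
set c := m / M * (1 + A / B)^-1.
have c0 : 0 <= c by rewrite /c mulr_ge0 ?invr_ge0 ?divr_ge0 ?ltW ?addr_gt0 ?divr_gt0.
have e0 : 0 <= s^-1 by rewrite invr_ge0 ltW.
split.
  rewrite -lerBrDl.
  have r1 : rho - 1 = l / a by rewrite /rho; field; rewrite gt_eqF.
  have r10 : 0 <= rho - 1 by rewrite r1 divr_ge0 ?ltW.
  have E1 : rho - 1 = ((rho - 1) `^ s) `^ (s^-1).
    by rewrite -powRrM mulfV ?lt0r_neq0 // powRr1.
  rewrite E1.
  apply: ge0_ler_powR => //; rewrite ?nnegrE ?powR_ge0 //.
  rewrite r1 divpow //; last exact: ltW.
  rewrite -/A -/P.
  have D0 : 0 < 1 + A / B by rewrite addr_gt0 // divr_gt0.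
  rewrite /c ler_pdivrMr // ler_pdivrMr //.
  apply: ltW; move: H'; rewrite -/A -/B -/P ltr_pdivrMr // => H'.
  apply: (lt_le_trans H'); rewrite le_eqVlt; apply/orP; left; apply/eqP; field.
  by rewrite !lt0r_neq0.
rewrite lerD2l; apply: ge0_ler_powR => //; rewrite ?nnegrE //.
  by rewrite divr_ge0 // ltW // mulr_gt0.
have AB1 : A / B <= 1 by rewrite ler_pdivrMr // mul1r.
rewrite /c (_ : m / (2 * M) = m / M * 2^-1); last by field; rewrite lt0r_neq0.
rewrite ler_pM2l; last by rewrite divr_gt0.
rewrite lef_pV2 ?posrE ?addr_gt0 ?divr_gt0 //.
lra.
Qed.
Lemma cube_measurable (R : realType) (d : nat) : measurable (cube R d).
Proof.
have -> : cube R d = \bigcap_(i in [set: 'I_d]) ((@tnth d R ^~ i) @^-1` `[0, 1]).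
  apply/seteqP; split => t /=.
    by move=> H i _ /=; rewrite in_itv /= H.
  by move=> H i; have := H i I; rewrite /= in_itv.
apply: fin_bigcap_measurable; first exact: finite_finset.
move=> i _; rewrite -[X in measurable X]setTI.
by apply: measurable_tnth => //; exact: measurable_itv.
Qed.

Theorem theorem2 (R : realType) (d : nat) (hd : (1 <= d)%N)
  (lam : {measure set (d.-tuple R) -> \bar R}) (hlam : is_lebesgue_measure lam)
  (F : set (d.-tuple R -> R))
  (hF : forall f, F f -> lam.-integrable (cube R d) (EFin \o f))
  (alpha m M : R) (halpha : 1 < alpha) (hm : 0 < m) (hmM : m <= M)
  (hlower : forall n : nat, (1 <= n)%N ->
     forall (dO : measure_display) (O : measurableType dO) (P : probability O R)
            (y : nat -> O -> d.-tuple R),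
       random_points y ->
       ((m * n%:R `^ (- alpha))%:E < sup_rmse lam F P y n)%E)
  (dO : measure_display) (O : measurableType dO) (P : probability O R)
  (x : nat -> O -> d.-tuple R) (hx : random_points x)
  (nk : nat -> nat) (hn1 : (1 <= nk 0)%N) (hninc : forall k, (nk k < nk k.+1)%N)
  (hupper : forall k, (sup_rmse lam F P x (nk k) <= (M * (nk k)%:R `^ (- alpha))%:E)%E) :
  forall k : nat,
    let rho := (nk k.+1)%:R / (nk k)%:R in
    1 + ((m / M) * (1 + rho `^ (1 - alpha))^-1) `^ (alpha - 1)^-1 <= rho /\
    1 + (m / (2 * M)) `^ (alpha - 1)^-1
      <= 1 + ((m / M) * (1 + rho `^ (1 - alpha))^-1) `^ (alpha - 1)^-1.
Proof.
move=> k.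
have npos : forall j, (1 <= nk j)%N.
  by elim=> // j IH; apply: leq_trans IH (ltnW (hninc j)).
set n0 := nk k.
set L := (nk k.+1 - n0)%N.
have n1E : nk k.+1 = (n0 + L)%N by rewrite /L subnKC //; exact: ltnW (hninc k).
have Lp : (0 < L)%N by rewrite /L subn_gt0; exact: hninc.
have n0p : (0 < n0)%N := npos k.
pose y := fun i => x (n0 + i)%N.
have ry : random_points y.
  by split => [i|i w]; [exact: hx.1 | exact: hx.2].
have hl := hlower L Lp dO O P y ry.
pose B := (n0 + L)%:R / L%:R * (M * (n0 + L)%:R `^ (- alpha)) +
          n0%:R / L%:R * (M * n0%:R `^ (- alpha)).
have ub : (sup_rmse lam F P y L <= B%:E)%E.
  apply: ge_ereal_sup => _ [f Ff <-].
  have mfc : measurable_fun (cube R d) f.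
    by apply/measurable_realfun.measurable_EFinP; exact: (measurable_int _ (hF f Ff)).
  have mfx : forall i, measurable_fun setT (f \o x i).
    move=> i; apply: (measurable_comp (cube_measurable R d)) => //.
    - by move=> _ [w _ <-]; exact: hx.2.
    - exact: hx.1.
  apply: (le_trans (@key _ _ lam _ _ P f x n0 L mfx n0p Lp)).
  rewrite /B EFinD !EFinM.
  have rle : forall j, (rmse lam P f x (nk j) <= (M * (nk j)%:R `^ (- alpha))%:E)%E.
    move=> j; apply: le_trans (hupper j).
    by apply: ereal_sup_ubound; exists f.
  apply: leeD; apply: lee_wpmul2l; rewrite ?lee_fin ?divr_ge0 ?ler0n //.
  - by rewrite -n1E; exact: rle.
  - exact: rle.
have H : m * L%:R `^ (- alpha) < B.
  by rewrite -lte_fin; apply: lt_le_trans hl ub.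
move: H; rewrite /B => H.
rewrite n1E natrD.
apply: real_part => //; try by rewrite ltr0n.
move: H; rewrite natrD => H; apply: (lt_le_trans H).
rewrite le_eqVlt; apply/orP; left; apply/eqP; field.
by rewrite pnatr_eq0 -lt0n.
Qed.
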